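(* Let $q$ be an even integer with $q\geq4$. Then $\sqrt{(q-1)(17q-1)}$ is an integer if and only if \[ q\in\left\{\frac1{34}\left(\operatorname{tr}\!\left((2177+528\sqrt{17})^{m}(433+105\sqrt{17})\right)+18\right)\;\middle|\;m\in\mathbb{Z}\right\}. \]
   Context: $\operatorname{tr}$ denotes the trace from $\mathbb{Q}(\sqrt{17})$ to $\mathbb{Q}$, i.e. $\operatorname{tr}(a+b\sqrt{17})=2a$ for $a,b\in\mathbb{Q}$. *)

(* Defs.v *)
(* The quadratic field Q(sqrt 17) is modelled concretely as
   pairs (a, b) of rationals standing for a + b*sqrt 17. *)
From mathcomp Require Import all_boot all_order all_algebra.
Set Implicit Arguments. Unset Strict Implicit. Unset Printing Implicit Defensive.
Import Order.TTheory GRing.Theory Num.Theory.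
Local Open Scope ring_scope.

Record qs17 := QS { qre : rat; qir : rat }.

Definition qs17_mul (x y : qs17) : qs17 :=
  QS (qre x * qre y + 17%:R * qir x * qir y) (qre x * qir y + qir x * qre y).

Definition qs17_one : qs17 := QS 1 0.

Definition qs17_norm (x : qs17) : rat := qre x ^+ 2 - 17%:R * qir x ^+ 2.

Definition qs17_inv (x : qs17) : qs17 :=
  QS (qre x / qs17_norm x) (- qir x / qs17_norm x).

Fixpoint qs17_expn (x : qs17) (n : nat) : qs17 :=
  match n with 0%N => qs17_one | n.+1 => qs17_mul x (qs17_expn x n) end.

Definition qs17_expz (x : qs17) (m : int) : qs17 :=
  match m with
  | Posz n => qs17_expn x n
  | Negz n => qs17_expn (qs17_inv x) n.+1
  end.

Definition qs17_tr (x : qs17) : rat := 2%:R * qre x.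

(* Main.v *)
Require Import Defs.
From mathcomp Require Import all_boot all_order all_algebra.
From mathcomp Require Import ring lra zify.
Import Order.TTheory GRing.Theory Num.Theory.
Local Open Scope ring_scope.

Definition pm (a b : int * int) : int * int :=
  (a.1 * b.1 + 17 * a.2 * b.2, a.1 * b.2 + a.2 * b.1).

Arguments pm : simpl never.

Fixpoint pexpn (e : int * int) (n : nat) : int * int :=
  match n with 0%N => (1, 0) | n.+1 => pm e (pexpn e n) end.

Definition eps : int * int := (2177, 528).
Definition epsi : int * int := (2177, -528).
Definition al : int * int := (433, 105).

Definition pexpz (m : int) : int * int :=
  match m with Posz n => pexpn eps n | Negz n => pexpn epsi n.+1 end.

Lemma pexpnS e n : pexpn e n.+1 = pm e (pexpn e n). Proof. by []. Qed.
Lemma pexpn0 e : pexpn e 0 = (1, 0). Proof. by []. Qed.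
Lemma pexpzN n : pexpz (Negz n) = pexpn epsi n.+1. Proof. by []. Qed.
Lemma pexpzZ n : pexpz (Posz n) = pexpn eps n. Proof. by []. Qed.

Lemma pairE (a b c d : int) : a = c -> b = d -> (a, b) = (c, d).
Proof. by move=> -> ->. Qed.

Lemma pmA a b c : pm a (pm b c) = pm (pm a b) c.
Proof. case: a b c => [a1 a2] [b1 b2] [c1 c2]; rewrite /pm /=; apply: pairE; ring. Qed.

Lemma pm1 c : pm (1, 0) c = c.
Proof. case: c => [c1 c2]; rewrite /pm /=; apply: pairE; ring. Qed.

Lemma eps_epsi : pm eps epsi = (1, 0).
Proof. rewrite /pm /eps /epsi; cbn [fst snd]; apply: pairE; ring. Qed.

Lemma epsi_eps : pm epsi eps = (1, 0).
Proof. rewrite /pm /eps /epsi; cbn [fst snd]; apply: pairE; ring. Qed.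

Lemma pexpzS m : pexpz (m + 1) = pm eps (pexpz m).
Proof.
case: m => n.
  by have -> : Posz n + 1 = Posz n.+1 by lia.
case: n => [|n].
  have -> : Negz 0 + 1 = 0 by lia.
  by rewrite pexpzN pexpzZ !pexpnS pexpn0 pmA eps_epsi.
have -> : Negz n.+1 + 1 = Negz n by lia.
by rewrite !pexpzN [in RHS]pexpnS [in RHS]pmA eps_epsi pm1.
Qed.

Lemma pexpzP m : pexpz (m - 1) = pm epsi (pexpz m).
Proof.
have := pexpzS (m - 1); rewrite subrK => ->.
by rewrite pmA epsi_eps pm1.
Qed.

Definition Qp (x y : int) :=
  exists m, pm (pexpz m) al = (x, y) \/ pm (pexpz m) al = (x, - y).

Lemma QpN x y : Qp x y -> Qp x (- y).
Proof. by case=> m [] H; exists m; [right|left]; rewrite ?opprK. Qed.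

Lemma base_check : all (fun i => all (fun j =>
     ((25 + 34 * i) * (25 + 34 * i) == 64 + 17 * (j * j))%N ==> (i == 4)%N && (j == 39)%N)
     (iota 0 65)) (iota 0 8).
Proof. vm_compute. reflexivity. Qed.

Lemma base (x y t : int) : 0 <= y -> y <= 64 -> 0 < x -> x * x = 64 + 17 * (y * y) ->
  x = 25 + 34 * t -> x = 161 /\ y = 39.
Proof.
move=> y0 y64 x0 E Ex.
have t0 : 0 <= t by lia.
have yy : y * y <= 64 * 64 by apply: (@ler_pM int).
have xx : x <= 264.
  rewrite leNgt; apply/negP => h.
  have : 265 * 265 <= x * x by apply: (@ler_pM int); lia.
  lia.
have t7 : t <= 7 by lia.
case: t t0 t7 Ex => // tn _ t7 Ex; case: y y0 y64 E yy => // yn _ y64 E _.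
have Htn : tn \in iota 0 8 by rewrite mem_iota; lia.
have Hyn : yn \in iota 0 65 by rewrite mem_iota; lia.
move/allP: base_check => /(_ _ Htn) /allP /(_ _ Hyn) /implyP.
have -> : ((25 + 34 * tn) * (25 + 34 * tn) == 64 + 17 * (yn * yn))%N by apply/eqP; lia.
move=> /(_ isT) /andP [/eqP h1 /eqP h2]; lia.
Qed.

Lemma sq_le {a b : int} : 0 <= a -> a <= b -> a * a <= b * b.
Proof. by move=> a0 ab; apply: ler_pM => //; apply: le_trans ab. Qed.

Lemma descent (n : nat) : forall x y : int, 0 <= y -> y <= n%:Z -> 0 < x ->
  x * x = 64 + 17 * (y * y) -> (exists t, x = 25 + 34 * t) -> Qp x y.
Proof.
elim: n => [|n IH] x y y0 yn x0 E [t Ex].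
  have [-> ->] := base _ _ _ y0 (ltac:(lia)) x0 E Ex.
  exists (Negz 0); right; rewrite pexpzN pexpnS pexpn0 /pm /epsi /al; cbn [fst snd]; apply: pairE; ring.
have [y64|y64] := lerP y 64.
  have [-> ->] := base _ _ _ y0 y64 x0 E Ex.
  exists (Negz 0); right; rewrite pexpzN pexpnS pexpn0 /pm /epsi /al; cbn [fst snd]; apply: pairE; ring.
set x' := 2177 * x - 8976 * y.
set y' := 2177 * y - 528 * x.
have yy : 65 * 65 <= y * y by apply: sq_le; lia.
have x'0 : 0 < x'.
  rewrite /x' ltNge subr_le0; apply/negP => h.
  have a0 : 0 <= 2177 * x by lia.
  have := sq_le a0 h; lia.
have y'1 : y' < y.
  rewrite /y' ltNge; apply/negP => h.
  have h' : 528 * x <= 2176 * y by lia.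
  have a0 : 0 <= 528 * x by lia.
  have := sq_le a0 h'; lia.
have y'2 : - y < y'.
  rewrite /y' ltNge; apply/negP => h.
  have h' : 2178 * y <= 528 * x by lia.
  have a0 : 0 <= 2178 * y by lia.
  have := sq_le a0 h'; lia.
have E' : x' * x' = 64 + 17 * (y' * y').
  have : x' * x' - 17 * (y' * y') = x * x - 17 * (y * y) by rewrite /x' /y'; ring.
  lia.
have C' : exists t, x' = 25 + 34 * t by exists (1600 + 2177 * t - 264 * y); rewrite /x'; lia.
have Q' : Qp x' y'.
  have [h|h] := lerP 0 y'.
    apply: IH; [lia|lia|exact: x'0|exact: E'|exact: C'].
  have Q2 : Qp x' (- y').
    apply: IH; [lia|lia|exact: x'0|by rewrite mulrNN|exact: C'].
  by rewrite -[y']opprK; apply: QpN.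
case: Q' => m [] H.
  exists (m + 1); left; rewrite pexpzS -pmA H /pm /eps /epsi /x' /y'; cbn [fst snd]; apply: pairE; ring.
exists (m - 1); right; rewrite pexpzP -pmA H /pm /eps /epsi /x' /y'; cbn [fst snd]; apply: pairE; ring.
Qed.

Definition emb (p : int * int) : qs17 := QS (p.1)%:~R (p.2)%:~R.

Lemma emb_mul a b : qs17_mul (emb a) (emb b) = emb (pm a b).
Proof.
case: a b => [a1 a2] [b1 b2]; rewrite /emb /qs17_mul /pm; cbn [fst snd qre qir]; congr QS.
  rewrite (intrD _ (a1 * b1)) (intrM _ a1 b1) (intrM _ (17 * a2)) (intrM _ 17 a2).
  by rewrite [(17 : int)%:~R]rmorph_nat.
by rewrite !intrD !intrM.
Qed.

Lemma emb_eps : QS 2177%:R 528%:R = emb eps.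
Proof. by rewrite /emb /= !rmorph_nat. Qed.

Lemma emb_al : QS 433%:R 105%:R = emb al.
Proof. by rewrite /emb /= !rmorph_nat. Qed.

Lemma emb_inv : qs17_inv (emb eps) = emb epsi.
Proof.
rewrite /qs17_inv /emb /=.
have -> : qs17_norm (QS (2177 : int)%:~R (528 : int)%:~R) = 1.
  rewrite /qs17_norm /= !rmorph_nat; ring.
by rewrite !divr1 rmorphN /=.
Qed.

Lemma emb_expn e n : qs17_expn (emb e) n = emb (pexpn e n).
Proof.
elim: n => [|n IH].
  by rewrite pexpn0 /emb /qs17_one; cbn [fst snd]; rewrite ?rmorph1 ?rmorph0.
by rewrite pexpnS -emb_mul -IH.
Qed.

Lemma emb_expz m : qs17_expz (emb eps) m = emb (pexpz m).
Proof.
case: m => n; first exact: emb_expn.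
by rewrite pexpzN pexpnS -emb_mul -emb_expn -emb_inv.
Qed.

Lemma rhsE m : (qs17_tr (qs17_mul (qs17_expz (QS 2177%:R 528%:R) m) (QS 433%:R 105%:R))
        + 18%:R) / 34%:R = (2%:R * ((pm (pexpz m) al).1)%:~R + 18%:R) / 34%:R :> rat.
Proof. by rewrite emb_eps emb_al emb_expz emb_mul /qs17_tr /emb; cbn [qre]. Qed.

Lemma norm_pm a b : (pm a b).1 ^+ 2 - 17 * (pm a b).2 ^+ 2 =
   (a.1 ^+ 2 - 17 * a.2 ^+ 2) * (b.1 ^+ 2 - 17 * b.2 ^+ 2).
Proof. rewrite /pm /=; ring. Qed.

Lemma norm_expn e n : e.1 ^+ 2 - 17 * e.2 ^+ 2 = 1 ->
  (pexpn e n).1 ^+ 2 - 17 * (pexpn e n).2 ^+ 2 = 1.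
Proof.
move=> He; elim: n => [|n IH] /=; first by ring.
by rewrite norm_pm He IH mul1r.
Qed.

Lemma norm_expz m : (pexpz m).1 ^+ 2 - 17 * (pexpz m).2 ^+ 2 = 1.
Proof.
case: m => n; rewrite ?pexpzN ?pexpzZ; apply: norm_expn; rewrite /eps /epsi; cbn [fst snd]; ring.
Qed.

Lemma cast_eq (q a : int) : ((q%:~R : rat) = (2%:R * a%:~R + 18%:R) / 34%:R) <-> 17 * q = a + 9.
Proof.
have e1 : ((2 * a + 18)%:~R : rat) = 2%:R * a%:~R + 18%:R.
  by rewrite intrD intrM [(2:int)%:~R]rmorph_nat [(18:int)%:~R]rmorph_nat.
have e2 : ((q * 34)%:~R : rat) = q%:~R * 34%:R.
  by rewrite intrM [(34:int)%:~R]rmorph_nat.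
have n34 : (34%:R : rat) != 0 by [].
rewrite -e1; split => H.
  have : ((q * 34)%:~R : rat) = (2 * a + 18)%:~R by rewrite e2 H mulfVK.
  move/eqP; rewrite eqr_int => /eqP; lia.
have -> : 2 * a + 18 = q * 34 by lia.
by rewrite e2 mulfK.
Qed.

Theorem lemmaA3 (q : int) (hq_even : (2 %| q)%Z) (hq4 : 4 <= q) :
  (exists k : int, 0 <= k /\ k ^+ 2 = (q - 1) * (17 * q - 1))
  <->
  (exists m : int,
     (q%:~R : rat) =
       (qs17_tr (qs17_mul (qs17_expz (QS 2177%:R 528%:R) m) (QS 433%:R 105%:R))
        + 18%:R) / 34%:R).
Proof.
have key := fun m => cast_eq q ((pm (pexpz m) al).1).
case/dvdzP: hq_even => r Hr.
split.
  case=> k [k0 Hk].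
  have : Qp (17 * q - 9) k.
    apply: (@descent `|k|%N) => //.
    - by rewrite abszE ger0_norm.
    - lia.
    - rewrite expr2 in Hk; lia.
    - by exists (r - 1); lia.
  case=> m [] H; exists m; rewrite rhsE key H; cbn [fst]; lia.
case=> m; rewrite rhsE key => H.
set a := (pm (pexpz m) al).1 in H; set b := (pm (pexpz m) al).2.
have N : a ^+ 2 - 17 * b ^+ 2 = 64.
  rewrite /a /b norm_pm norm_expz /al; cbn [fst snd]; ring.
have [b0|b0] := lerP 0 b.
  exists b; split => //; rewrite !expr2 in N *; nia.
exists (- b); split; first lia.
rewrite sqrrN; rewrite !expr2 in N *; nia.
Qed.
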